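(* Let $X$ be a compact metric space, $f\colon X\to X$ continuous, and $n\in\mathbb N$. Then $$\mathrm{Per}(f^{(n)})=\{[m_1,\dots,m_n]: m_i\in\mathrm{Per}(f)\ \text{for all}\ 1\le i\le n\},$$ $$\mathrm{Per}(f_n)=\bigcup_{l=1}^{n}\Big\{[d_1,\dots,d_l]: d_i\mid m_i\in\mathrm{Per}(f)\ \text{for all}\ 1\le i\le l,\ \text{and}\ \tfrac{m_1}{d_1}+\dots+\tfrac{m_l}{d_l}\le n\Big\},$$ $$\mathrm{Per}(f^{<\omega})=\bigcup_{l=1}^{\infty}\{[d_1,\dots,d_l]: d_i\mid m_i\in\mathrm{Per}(f)\ \text{for all}\ 1\le i\le l\},$$ where $[k_1,\dots,k_l]$ denotes the least common multiple of $k_1,\dots,k_l$.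
   Context: For a map $g$, $\mathrm{Per}(g)$ is the set of fundamental (least) periods of periodic points of $g$. $X^{(n)}$ is the $n$-fold Cartesian product $X\times\dots\times X$ and $f^{(n)}(x_1,\dots,x_n)=(f(x_1),\dots,f(x_n))$. $F_n(X)$ is the set of nonempty subsets of $X$ with at most $n$ points and $F(X)=\bigcup_{n\ge1}F_n(X)$ is the set of nonempty finite subsets of $X$; $f_n$ and $f^{<\omega}$ are the restrictions of the induced map $C\mapsto f(C)$ to $F_n(X)$ and $F(X)$ respectively. *)

(* Defs.v *)
From HB Require Import structures.
From mathcomp Require Import all_boot all_order all_algebra.
From mathcomp Require Import all_classical all_reals all_analysis.
Set Implicit Arguments. Unset Strict Implicit. Unset Printing Implicit Defensive.
Local Open Scope classical_set_scope.

Definition PerOn {T : Type} (S : set T) (g : T -> T) : set nat :=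
  [set p | exists x, S x /\ (0 < p)%N /\ iter p g x = x /\
           (forall k, (0 < k)%N -> (k < p)%N -> iter k g x <> x)].

Definition Per {T : Type} (g : T -> T) : set nat := PerOn setT g.

Definition prod_map {X : Type} (n : nat) (f : X -> X) : ('I_n -> X) -> ('I_n -> X) :=
  fun x i => f (x i).

Definition induced_map {X : Type} (f : X -> X) : set X -> set X := fun C => f @` C.

Definition Fn {X : eqType} (n : nat) : set (set X) :=
  [set A | A !=set0 /\ exists s : seq X, (size s <= n)%N /\ A = [set x | x \in s]].

Definition Ffin {X : eqType} : set (set X) :=
  [set A | A !=set0 /\ exists s : seq X, A = [set x | x \in s]].

Definition lcm_fam (l : nat) (k : 'I_l -> nat) : nat := \big[lcmn/1%N]_(i < l) k i.

(* Main.v *)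
Require Import Defs.
From HB Require Import structures.
From mathcomp Require Import all_boot all_order all_algebra.
From mathcomp Require Import all_classical all_reals all_analysis.
From mathcomp Require Import zify.
Local Open Scope classical_set_scope.

Module Aux.
Set Implicit Arguments. Unset Strict Implicit.
Local Open Scope nat_scope.
Section Gen.
Variable T : Type.
Implicit Types (g : T -> T) (x : T).

Definition lp g x p := (0 < p)%N /\ iter p g x = x /\
           (forall k, (0 < k)%N -> (k < p)%N -> iter k g x <> x).

Lemma iter_mul g x p c : iter p g x = x -> iter (c * p) g x = x.
Proof. by move=> H; elim: c => // c IH; rewrite mulSn iterD IH H. Qed.

Lemma iter_mod g x p k : lp g x p -> iter k g x = iter (k %% p) g x.
Proof.
case=> _ [H _]; rewrite {1}(divn_eq k p) addnC iterD iter_mul //.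
Qed.

Lemma iter_comm g a b x : iter a g (iter b g x) = iter b g (iter a g x).
Proof. by rewrite -!iterD addnC. Qed.

Lemma lp_small g x p a b : lp g x p -> a < p -> b < p -> iter a g x = iter b g x -> a = b.
Proof.
move=> Hp.
wlog lab : a b / a <= b.
  move=> W ha hb E; case: (leqP a b) => h; first exact: W.
  by apply/esym/W => //; apply: ltnW.
move=> ha hb E; case: (ltngtP a b) => [hlt|hlt|//]; last by rewrite ltnNge lab in hlt.
exfalso.
have [p0 [Hp' Hm]] := Hp.
have h1 : 0 < b - a by rewrite subn_gt0.
have h2 : b - a < p by apply: leq_ltn_trans hb; apply: leq_subr.
apply: (Hm (b - a) h1 h2).
have e1 : iter (b - a) g (iter a g x) = iter a g x.
  by rewrite -iterD subnK // E.
have e2 : iter (p - a) g (iter a g x) = x by rewrite -iterD subnK ?Hp' // ltnW.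
by rewrite -{1}e2 iter_comm e1 e2.
Qed.

Lemma lp_eqmod g x p a b : lp g x p -> (iter a g x = iter b g x <-> a = b %[mod p]).
Proof.
move=> Hp; have p0 : 0 < p by case: Hp.
split=> [E|E]; last by rewrite (iter_mod a Hp) (iter_mod b Hp) E.
apply: (lp_small Hp); rewrite ?ltn_pmod //.
by rewrite -!(iter_mod _ Hp).
Qed.

Lemma lp_iff g x p k : lp g x p -> (iter k g x = x <-> p %| k).
Proof.
move=> Hp; split=> [H|H].
  have /(lp_eqmod k 0 Hp) : iter k g x = iter 0 g x by [].
  by rewrite mod0n /dvdn => ->.
by apply/(lp_eqmod k 0 Hp); rewrite mod0n; apply/eqP.
Qed.

Lemma lp_of_char g x L : 0 < L -> (forall k, iter k g x = x <-> L %| k) -> lp g x L.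
Proof.
move=> L0 H; split=> //; split; first by apply/H.
move=> k k0 kL /H /(dvdn_leq k0); by rewrite leqNgt kL.
Qed.

Lemma lp_uniq g x p L : lp g x p -> (forall k, iter k g x = x <-> L %| k) -> p = L.
Proof.
move=> Hp H; apply/eqP; rewrite eqn_dvd; apply/andP; split.
  by apply/(lp_iff _ Hp)/H.
by apply/H/(lp_iff _ Hp).
Qed.

Lemma lp_uniq2 g x p q : lp g x p -> lp g x q -> p = q.
Proof. by move=> Hp Hq; apply: (lp_uniq Hp) => k; apply: lp_iff. Qed.

Lemma lp_iter g x p a : lp g x p -> lp g (iter a g x) p.
Proof.
move=> Hp; have p0 : 0 < p by case: Hp.
apply: lp_of_char => // k; rewrite -iterD -{2}(add0n a) (lp_eqmod _ _ Hp).
split=> [/eqP|H]; first by rewrite eqn_modDr mod0n.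
by apply/eqP; rewrite eqn_modDr mod0n.
Qed.

Lemma lp_exists g x p : 0 < p -> iter p g x = x -> exists q, lp g x q.
Proof.
move=> p0 H.
have ex : exists q, `[< 0 < q /\ iter q g x = x >] by exists p; apply/asboolP.
case: (ex_minnP ex) => q /asboolP [q0 Hq] Hmin; exists q; split=> //; split=> //.
move=> k k0 kq Hk; have : q <= k by apply: Hmin; apply/asboolP.
by rewrite leqNgt kq.
Qed.

End Gen.

Lemma lcm_dvdP l (m : 'I_l -> nat) k : lcm_fam m %| k <-> forall i, m i %| k.
Proof. by split=> [/dvdn_biglcmP H i|H]; [apply: H|apply/dvdn_biglcmP => i _; apply: H]. Qed.

Lemma lcm_gt0 l (m : 'I_l -> nat) : (forall i, 0 < m i) -> 0 < lcm_fam m.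
Proof.
move=> H; rewrite /lcm_fam; elim/big_ind: _ => // a b ha hb.
by rewrite lcmn_gt0 ha hb.
Qed.

Lemma PerP T (g : T -> T) p : Per g p <-> exists x, lp g x p.
Proof. by split=> [[x [_ H]]|[x H]]; exists x. Qed.

Lemma iter_prod (X : Type) (n : nat) (f : X -> X) k x : iter k (@prod_map X n f) x = fun i => iter k f (x i).
Proof. by elim: k => //= k ->. Qed.

Lemma iter_prod_eq (X : Type) (n : nat) (f : X -> X) k x :
  iter k (@prod_map X n f) x = x <-> forall i, iter k f (x i) = x i.
Proof.
rewrite iter_prod; split=> [E i|H]; first by rewrite -{2}E.
by apply: funext => i.
Qed.

Lemma part1 (X : Type) (n : nat) (f : X -> X) :
  Per (@prod_map X n f) =
        [set k | exists m : 'I_n -> nat, (forall i, Per f (m i)) /\ k = lcm_fam m].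
Proof.
apply/seteqP; split=> k /=.
  move=> /PerP [x Hx].
  have p0 : 0 < k by case: Hx.
  have Hp : iter k (@prod_map X n f) x = x by case: Hx => _ [].
  have H1 : forall i, exists q, lp f (x i) q.
    move=> i; apply: (lp_exists p0); exact: (iffLR (iter_prod_eq _ _ _) Hp i).
  have [m Hm] := fin_all_exists H1.
  exists m; split; first by move=> i; apply/PerP; exists (x i).
  apply: (lp_uniq Hx) => j; rewrite iter_prod_eq lcm_dvdP.
  by split=> H i; apply/(lp_iff _ (Hm i)).
case=> m [Hm ->].
have H1 : forall i, exists y, lp f y (m i) by move=> i; apply/PerP.
have [x Hx] := fin_all_exists H1.
apply/PerP; exists x; apply: lp_of_char.
  by apply: lcm_gt0 => i; case: (Hx i).
move=> j; rewrite iter_prod_eq lcm_dvdP.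
by split=> H i; apply/(lp_iff _ (Hx i)).
Qed.

Lemma iter_ind (X : Type) (f : X -> X) k A : iter k (induced_map f) A = (iter k f) @` A.
Proof.
elim: k => [|k IH] /=; first by rewrite image_id.
by rewrite IH /induced_map image_comp.
Qed.

Lemma iter_iter (T : Type) (f : T -> T) c p x : iter c (iter p f) x = iter (c * p) f x.
Proof. by elim: c => //= c ->; rewrite mulSn iterD. Qed.

Section Sets.
Variables (X : eqType) (f : X -> X).

Lemma img_eq (s : seq X) k :
  (iter k f) @` [set x | x \in s] = [set x | x \in s] <->
  (forall y, y \in s -> iter k f y \in s) /\
  (forall y, y \in s -> exists2 z, z \in s & iter k f z = y).
Proof.
split=> [E|[H1 H2]].
  split=> y ys.
    have H : (iter k f @` [set x | x \in s]) (iter k f y) by exists y.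
    by rewrite E in H.
  have H : [set x | x \in s] y by [].
  by rewrite -E in H; case: H => z zs <-; exists z.
apply/seteqP; split=> y /=.
  by case=> z zs <-; apply: H1.
by move=> /H2 [z zs <-]; exists z.
Qed.

Lemma dir1 (s : seq X) p : lp (induced_map f) [set x | x \in s] p -> s != [::] ->
  exists l, exists d m : 'I_l -> nat,
   [/\ 0 < l, l <= size s, forall i, Per f (m i) /\ d i %| m i,
      \sum_(i < l) (m i %/ d i) <= size s & p = lcm_fam d].
Proof.
move=> Hlp sn0.
have [z0 z0s] : exists y, y \in s by case: s Hlp sn0 => // y s' _ _; exists y; rewrite mem_head.
have p0 : 0 < p by case: Hlp.
have Hp : forall k, (iter k f) @` [set x | x \in s] = [set x | x \in s] <-> p %| k.
  by move=> k; rewrite -iter_ind; apply: lp_iff.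
have [into onto] := iffLR (img_eq s p) (iffRL (Hp p) (dvdnn p)).
have intoM : forall c y, y \in s -> iter (c * p) f y \in s.
  move=> c y ys; rewrite -iter_iter; elim: c => //= c IH.
  by rewrite -{1}[iter p f]/(iter p f) into.
have per_ex : forall y0, y0 \in s -> exists q, lp f y0 q.
  move=> y0 y0s.
  pose g := iter p f.
  have [pre Hpre] : {pre : X -> X & forall y, y \in s -> pre y \in s /\ g (pre y) = y}.
    apply: (@choice X X (fun y z => y \in s -> z \in s /\ g z = y)) => y.
    case: (boolP (y \in s)) => ys.
      by have [z zs E] := onto y ys; exists z.
    by exists y.
  pose h j := iter j pre y0.
  have hs : forall j, h j \in s by elim=> //= j IH; case: (Hpre _ IH).
  have hg : forall j, iter j g (h j) = y0.
    elim=> // j IH; rewrite iterSr /h /= (proj2 (Hpre _ (hs j))); exact: IH.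
  have [a [b [ab _ Eab]]] : exists a b, [/\ a < b, b < (size s).+1 & h a = h b].
    have nu : ~~ uniq (map h (iota 0 (size s).+1)).
      apply/negP => U; have := uniq_leq_size U.
      have sub : {subset map h (iota 0 (size s).+1) <= s}.
        by move=> z /mapP [j _ ->]; apply: hs.
      by move=> /(_ s sub); rewrite size_map size_iota ltnn.
    have [a [b [ab bs E]]] := uniqPn y0 nu.
    rewrite size_map size_iota in bs.
    exists a, b; split=> //.
    by rewrite !(nth_map 0) ?size_iota ?(ltn_trans ab) // !nth_iota ?(ltn_trans ab) in E.
  apply: (@lp_exists _ _ _ ((b - a) * p)); first by rewrite muln_gt0 subn_gt0 ab.
  by rewrite -iter_iter -/g -{1}(hg a) -iterD subnK ?(ltnW ab) // Eab hg.
have [pr Hpr] : {pr : X -> nat & forall y, y \in s -> lp f y (pr y)}.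
  apply: (@choice X nat (fun y q => y \in s -> lp f y q)) => y.
  case: (boolP (y \in s)) => ys; last by exists 0.
  by have [q Hq] := per_ex y ys; exists q.
have B : forall y q, y \in s -> lp f y q -> iter (gcdn p q) f y \in s.
  move=> y q ys Hq; case: (egcdnP q p0) => km kn E _.
  have -> : iter (gcdn p q) f y = iter (km * p) f y.
    apply/(lp_eqmod _ _ Hq); by rewrite E modnMDl.
  exact: intoM.
have B' : forall t y q, y \in s -> lp f y q -> iter (t * gcdn p q) f y \in s.
  elim=> [|t IH] y q ys Hq //; rewrite mulSn iterD.
  by apply: (B _ q); [apply: IH | apply: lp_iter].
set P := undup (map pr s).
set l := size P.
pose m (i : 'I_l) := nth 0 P i.
pose d (i : 'I_l) := gcdn p (m i).
have rep_ex : forall i : 'I_l, exists y, y \in s /\ pr y = m i.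
  move=> i; have : m i \in P by apply: mem_nth.
  by rewrite mem_undup => /mapP [y ys ->]; exists y.
have [rep Hrep] := fin_all_exists rep_ex.
have Hrep' : forall i, lp f (rep i) (m i).
  by move=> i; case: (Hrep i) => ys <-; apply: Hpr.
have m0 : forall i, 0 < m i by move=> i; case: (Hrep' i).
have d0 : forall i, 0 < d i by move=> i; rewrite gcdn_gt0 p0.
have idx : forall y, y \in s -> exists i : 'I_l, m i = pr y.
  move=> y ys; have yP : pr y \in P by rewrite mem_undup; apply: map_f.
  by exists (Ordinal (etrans (index_mem _ _) yP)); rewrite /m /= nth_index.
exists l, d, m; split.
- have [i _] := idx z0 z0s; exact: (leq_ltn_trans (leq0n _) (ltn_ord i)).
- by rewrite /l (leq_trans (size_undup _)) // size_map.
- move=> i; split; last exact: dvdn_gcdr.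
  by apply/PerP; exists (rep i).
- pose S := [seq iter (j * d i) f (rep i) | i <- enum 'I_l, j <- iota 0 (m i %/ d i)].
  have Ssub : {subset S <= s}.
    move=> z /allpairsPdep [i [j [_ jI ->]]].
    by apply: B'; [case: (Hrep i) | apply: Hrep'].
  have jlt : forall i j, j \in iota 0 (m i %/ d i) -> j * d i < m i.
    by move=> i j; rewrite mem_iota add0n /= ltn_divRL // dvdn_gcdr.
  have Su : uniq S.
    apply: allpairs_uniq_dep; [exact: enum_uniq | by move=> i _; apply: iota_uniq |].
    move=> p1 p2 /allpairsPdep [i [j [_ jI ->]]] /allpairsPdep [i' [j' [_ jI' ->]]] /= E.
    have Emm : m i = m i'.
      apply: (lp_uniq2 (lp_iter (j * d i) (Hrep' i))); rewrite E; apply: lp_iter; exact: Hrep'.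
    have ii : i = i'.
      apply: val_inj; apply/eqP.
      by rewrite -(nth_uniq 0 (ltn_ord i) (ltn_ord i') (undup_uniq _)); apply/eqP.
    subst i'.
    have := lp_small (Hrep' i) (jlt _ _ jI) (jlt _ _ jI') E.
    by move/eqP; rewrite eqn_pmul2r // => /eqP ->.
  have := uniq_leq_size Su Ssub.
  rewrite size_allpairs_dep sumnE big_map big_enum /=.
  by under eq_bigr do rewrite size_iota.
- apply/eqP; rewrite eqn_dvd; apply/andP; split; last first.
    by apply/lcm_dvdP => i; apply: dvdn_gcdl.
  apply/Hp/img_eq; split.
    move=> y ys; have [i Ei] := idx y ys.
    have /dvdnP [t ->] : d i %| lcm_fam d by apply: (iffLR (lcm_dvdP d _) (dvdnn _) i).
    by rewrite /d Ei; apply: B' => //; apply: Hpr.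
  move=> y ys; have [i Ei] := idx y ys.
  have /dvdnP [t Et] : d i %| lcm_fam d by apply: (iffLR (lcm_dvdP d _) (dvdnn _) i).
  exists (iter ((pr y).-1 * lcm_fam d) f y).
    by rewrite Et mulnA /d Ei; apply: B' => //; apply: Hpr.
  have Hy := Hpr y ys; have q0 : 0 < pr y by case: Hy.
  rewrite -iterD -{1}(mul1n (lcm_fam d)) -mulnDl add1n prednK //.
  by apply/(lp_iff _ Hy); apply: dvdn_mulr.
Qed.
End Sets.

Section Dir2.
Variables (X : eqType) (f : X -> X).

Lemma dir2 l (d m : 'I_l -> nat) : 0 < l -> (forall i, Per f (m i) /\ d i %| m i) ->
  exists s : seq X, [/\ s != [::], size s <= \sum_(i < l) (m i %/ d i) &
     lp (induced_map f) [set x | x \in s] (lcm_fam d)].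
Proof.
move=> l0 Hdm.
have i0 : 'I_l := Ordinal l0.
have [x0 _] : exists x0, lp f x0 (m i0) by apply/PerP; case: (Hdm i0).
have [pt Hpt] : {pt : nat -> X & forall q, Per f q -> lp f (pt q) q}.
  apply: (@choice nat X (fun q x => Per f q -> lp f x q)) => q.
  case: (pselect (Per f q)) => Hq; last by exists x0.
  by have [y Hy] := iffLR (PerP _ _) Hq; exists y.
pose L i := \big[lcmn/1]_(j < l | m j == m i) d j.
pose x i := pt (m i).
have Hx : forall i, lp f (x i) (m i) by move=> i; apply: Hpt; case: (Hdm i).
have m0 : forall i, 0 < m i by move=> i; case: (Hx i).
have dm : forall i, d i %| m i by move=> i; case: (Hdm i).
have d0 : forall i, 0 < d i by move=> i; apply: (dvdn_gt0 (m0 i) (dm i)).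
have dL : forall i, d i %| L i.
  by move=> i; have /dvdn_biglcmP H := dvdnn (L i); apply: H.
have Lm : forall i, L i %| m i by move=> i; apply/dvdn_biglcmP => j /eqP <-.
have L0 : forall i, 0 < L i by move=> i; apply: (dvdn_gt0 (m0 i) (Lm i)).
have LE : forall i i', m i = m i' -> L i = L i'.
  by move=> i i' E; rewrite /L; apply: eq_bigl => j; rewrite E.
pose S := [seq iter (k * L i) f (x i) | i <- enum 'I_l, k <- iota 0 (m i %/ L i)].
have memS : forall y, y \in S <-> exists i k, y = iter (k * L i) f (x i).
  move=> y; split=> [/allpairsPdep [i [k [_ _ ->]]]|[i [k ->]]]; first by exists i, k.
  apply/allpairsPdep; exists i, (k %% (m i %/ L i)); split.
  - by rewrite mem_enum.
  - rewrite mem_iota /= add0n ltn_pmod // divn_gt0 // dvdn_leq //.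
  - apply/(lp_eqmod _ _ (Hx i)).
    by rewrite muln_modl divnK // modn_mod.
have charL : forall k, (iter k f) @` [set x | x \in S] = [set x | x \in S] <->
                       forall i, L i %| k.
  move=> k; split=> [/img_eq [into _] i|H].
    have xS : x i \in S by apply/memS; exists i, 0.
    have /memS [i' [j E]] := into _ xS.
    have Emm : m i = m i'.
      apply: (lp_uniq2 (lp_iter k (Hx i))); rewrite E; apply: lp_iter; exact: Hx.
    have Ex : x i' = x i by rewrite /x Emm.
    rewrite Ex -(LE _ _ Emm) in E.
    have /(lp_eqmod _ _ (Hx i)) E' := E.
    have := congr1 (modn ^~ (L i)) E'; rewrite /= !modn_dvdm // modnMl.
    by rewrite /dvdn => ->.
  apply/img_eq; split.
    move=> y /memS [i [j ->]]; apply/memS; exists i.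
    have /dvdnP [t ->] := H i.
    by exists (t + j); rewrite -iterD mulnDl.
  move=> y /memS [i [j ->]].
  have /dvdnP [t Et] := H i.
  exists (iter ((j + (m i).-1 * t) * L i) f (x i)); first by apply/memS; exists i, (j + (m i).-1 * t).
  rewrite -iterD; apply/(lp_eqmod _ _ (Hx i)).
  have mi := m0 i.
  have -> : k + (j + (m i).-1 * t) * L i = (t * L i) * m i + j * L i.
    rewrite Et; move: mi; case: (m i) => // q _ /=; lia.
  by rewrite modnMDl.
exists S; split.
- apply/negP => /eqP S0.
  have : x i0 \in S by apply/memS; exists i0, 0.
  by rewrite S0.
- rewrite size_allpairs_dep sumnE big_map big_enum /=.
  under eq_bigr do rewrite size_iota.
  apply: leq_sum => i _; apply: leq_div2l => //; apply: dvdn_leq => //.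
- apply: lp_of_char; first by apply: lcm_gt0.
  move=> k; rewrite iter_ind charL lcm_dvdP; split=> H i.
    exact: (dvdn_trans (dL i) (H i)).
  by apply/dvdn_biglcmP => j _.
Qed.
End Dir2.

End Aux.
Import Aux.
Unset Implicit Arguments. Set Strict Implicit.

Theorem proposition8p1 (R : realType) (X : metricType R) (f : X -> X) (n : nat) :
  compact [set: X] -> continuous f ->
  [/\ Per (@prod_map X n f) =
        [set k | exists m : 'I_n -> nat, (forall i, Per f (m i)) /\ k = lcm_fam m],
      PerOn (@Fn X n) (induced_map f) =
        [set k | exists l : nat, [/\ (1 <= l)%N, (l <= n)%N &
           exists d m : 'I_l -> nat,
             [/\ forall i, Per f (m i) /\ (d i %| m i)%N,
                 (\sum_(i < l) (m i %/ d i) <= n)%N &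
                 k = lcm_fam d]]]
    & PerOn (@Ffin X) (induced_map f) =
        [set k | exists l : nat, (1 <= l)%N /\
           exists d m : 'I_l -> nat,
             (forall i, Per f (m i) /\ (d i %| m i)%N) /\ k = lcm_fam d]].
Proof.
move=> _ _; split.
- exact: part1.
- apply/seteqP; split=> k /=.
    move=> [A [[[y Ay] [s [sn EA]]] Hlp]]; subst A.
    have sn0 : s != [::] by apply/negP => /eqP s0; rewrite s0 in Ay.
    have [l [d [m [l0 ls Hdm Hsum ->]]]] := dir1 Hlp sn0.
    exists l; split => //; first exact: leq_trans ls sn.
    by exists d, m; split => //; apply: leq_trans Hsum sn.
  move=> [l [l0 ln [d [m [Hdm Hsum ->]]]]].
  have [s [s0 ss Hlp]] := dir2 l0 Hdm.
  exists [set x | x \in s]; split => //; split.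
    by case: s s0 {ss Hlp} => // y s' _; exists y; rewrite /= mem_head.
  by exists s; split => //; apply: leq_trans ss Hsum.
- apply/seteqP; split=> k /=.
    move=> [A [[[y Ay] [s EA]] Hlp]]; subst A.
    have sn0 : s != [::] by apply/negP => /eqP s0; rewrite s0 in Ay.
    have [l [d [m [l0 ls Hdm Hsum ->]]]] := dir1 Hlp sn0.
    by exists l; split => //; exists d, m.
  move=> [l [l0 [d [m [Hdm ->]]]]].
  have [s [s0 ss Hlp]] := dir2 l0 Hdm.
  exists [set x | x \in s]; split => //; split.
    by case: s s0 {ss Hlp} => // y s' _; exists y; rewrite /= mem_head.
  by exists s.
Qed.
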